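(* Let $\mathcal{X}\subseteq\mathbb{R}^d$ be a nonempty closed convex set and let $F\colon\mathcal{X}\to\mathbb{R}^d$ be monotone and $\beta$-smooth with respect to the $\ell_2$-norm. Consider the deterministic setting, i.e. $\widehat{F(x)}=F(x)$ for all queried points. Run Algorithm AdaPEG-Unbounded (described in the context) with parameters $\gamma_0>0$, $\eta>0$, and let $\bar x_T$ be its output. Let $D>0$ be any fixed value. Then \[\mathrm{Err}_D(\bar x_T)\le\frac1T\left(\frac{1}{2\gamma_0}\frac{D^4}{\eta^2}\beta^2+\frac{\gamma_0}{2}D^2+\frac{8}{\gamma_0}\beta^2\eta^2+\frac1{\gamma_0}\|F(x_\tau)-F(x_{\tau-1})\|^2+\frac1{\gamma_0}\|F(x_{\tau-1})-F(x_{\tau-2})\|^2\right),\] where $\tau$ is the last iteration $t$ such that $\gamma_{t-2}\le2\sqrt2\beta$. In particular, setting $\eta=\Theta(D)$ and $\gamma_0=1$, \[\mathrm{Err}_D(\bar x_T)\le O\left(\frac{\beta^2D^2+\|F(x_\tau)-F(x_{\tau-1})\|^2+\|F(x_{\tau-1})-F(x_{\tau-2})\|^2}{T}\right).\]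
   Context: $\|\cdot\|$ is the Euclidean norm. Monotone: $\langle F(x)-F(y),x-y\rangle\ge0$; $\beta$-smooth: $\|F(x)-F(y)\|\le\beta\|x-y\|$. $\mathrm{Err}_D(x)=\sup\{\langle F(y),x-y\rangle: y\in\mathcal{X},\ \|y-x_0\|\le D\}$ with $x_0$ the initial point. Algorithm AdaPEG-Unbounded: $x_0=z_0\in\mathcal{X}$, $\gamma_{-1}=0$. For $t=1,\dots,T$: $x_t=\arg\min_{u\in\mathcal{X}}\{\langle F(x_{t-1}),u\rangle+\tfrac12\gamma_{t-2}\|u-z_{t-1}\|^2+\tfrac12(\gamma_{t-1}-\gamma_{t-2})\|u-x_0\|^2\}$; $z_t=\arg\min_{u\in\mathcal{X}}\{\langle F(x_t),u\rangle+\tfrac12\gamma_{t-2}\|u-z_{t-1}\|^2+\tfrac12(\gamma_{t-1}-\gamma_{t-2})\|u-x_0\|^2\}$; $\gamma_t=\frac1\eta\sqrt{\eta^2\gamma_0^2+\sum_{s=1}^t\|F(x_s)-F(x_{s-1})\|^2}$. Output $\bar x_T=\frac1T\sum_{t=1}^Tx_t$. *)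

(* Defs.v *)
From HB Require Import structures.
From mathcomp Require Import all_boot all_order all_algebra.
From mathcomp Require Import all_classical all_reals all_analysis.
Set Implicit Arguments. Unset Strict Implicit. Unset Printing Implicit Defensive.
Import Order.TTheory GRing.Theory Num.Theory.
Import numFieldNormedType.Exports.
Local Open Scope classical_set_scope.
Local Open Scope ring_scope.

Section Defs.
Variables (R : realType) (d : nat).
Notation vec := 'rV[R]_d.

Definition dotp (u v : vec) : R := \sum_(i < d) u ord0 i * v ord0 i.
Definition enorm (u : vec) : R := Num.sqrt (dotp u u).

Definition monotone_on (X : set vec) (F : vec -> vec) : Prop :=
  forall x y, X x -> X y -> 0 <= dotp (F x - F y) (x - y).

Definition smooth_on (X : set vec) (F : vec -> vec) (beta : R) : Prop :=
  forall x y, X x -> X y -> enorm (F x - F y) <= beta * enorm (x - y).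

Definition ErrD (X : set vec) (F : vec -> vec) (x0 : vec) (D : R) (x : vec) : R :=
  sup [set dotp (F y) (x - y) | y in [set y | X y /\ enorm (y - x0) <= D]].

Definition gam (F : vec -> vec) (x : nat -> vec) (eta g0 : R) (t : nat) : R :=
  eta^-1 * Num.sqrt (eta ^+ 2 * g0 ^+ 2
    + \sum_(1 <= s < t.+1) enorm (F (x s) - F (x s.-1)) ^+ 2).

(* gm2 t = gamma_{t-2} for t >= 1, with gamma_{-1} = 0 *)
Definition gm2 (F : vec -> vec) (x : nat -> vec) (eta g0 : R) (t : nat) : R :=
  if t is t'.+2 then gam F x eta g0 t' else 0.

Definition step_obj (F : vec -> vec) (x z : nat -> vec) (eta g0 : R) (t : nat)
  (g u : vec) : R :=
  dotp g u + 2^-1 * gm2 F x eta g0 t * enorm (u - z t.-1) ^+ 2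
  + 2^-1 * (gam F x eta g0 t.-1 - gm2 F x eta g0 t) * enorm (u - x 0%N) ^+ 2.

Definition is_argmin (X : set vec) (phi : vec -> R) (v : vec) : Prop :=
  X v /\ forall u, X u -> phi v <= phi u.

Definition AdaPEG_iterates (X : set vec) (F : vec -> vec) (eta g0 : R) (T : nat)
  (x z : nat -> vec) : Prop :=
  z 0%N = x 0%N /\ X (x 0%N) /\
  forall t, (1 <= t <= T)%N ->
    is_argmin X (step_obj F x z eta g0 t (F (x t.-1))) (x t) /\
    is_argmin X (step_obj F x z eta g0 t (F (x t))) (z t).

Definition xbar (x : nat -> vec) (T : nat) : vec :=
  (T%:R)^-1 *: \sum_(1 <= t < T.+1) x t.

Definition tau (F : vec -> vec) (x : nat -> vec) (eta g0 beta : R) (T : nat) : nat :=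
  \max_(1 <= t < T.+1 | gm2 F x eta g0 t <= 2 * Num.sqrt 2 * beta) t.

End Defs.

(* Main.v *)
Require Import Defs.
From HB Require Import structures.
From mathcomp Require Import all_boot all_order all_algebra.
From mathcomp Require Import all_classical all_reals all_analysis.
From mathcomp Require Import ring lra.
Import Order.TTheory GRing.Theory Num.Theory.
Import numFieldNormedType.Exports.
Local Open Scope classical_set_scope.
Local Open Scope ring_scope.
Set Implicit Arguments. Unset Strict Implicit. Unset Printing Implicit Defensive.

Section Tools.
Variables (R : realType) (d : nat).
Notation vec := 'rV[R]_d.
Implicit Types u v w : vec.

Lemma dotpC u v : dotp u v = dotp v u.
Proof. by rewrite /dotp; apply: eq_bigr => i _; rewrite mulrC. Qed.

Lemma dotpDl u v w : dotp (u + v) w = dotp u w + dotp v w.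
Proof. by rewrite /dotp -big_split; apply: eq_bigr => i _; rewrite !mxE mulrDl. Qed.

Lemma dotpZl (a : R) u w : dotp (a *: u) w = a * dotp u w.
Proof. by rewrite /dotp mulr_sumr; apply: eq_bigr => i _; rewrite !mxE mulrA. Qed.

Lemma dotpNl u w : dotp (- u) w = - dotp u w.
Proof. by rewrite -scaleN1r dotpZl mulN1r. Qed.

Lemma dotpBl u v w : dotp (u - v) w = dotp u w - dotp v w.
Proof. by rewrite dotpDl dotpNl. Qed.

Lemma dotpDr u v w : dotp w (u + v) = dotp w u + dotp w v.
Proof. by rewrite dotpC dotpDl !(dotpC w). Qed.
Lemma dotpZr (a : R) u w : dotp w (a *: u) = a * dotp w u.
Proof. by rewrite dotpC dotpZl dotpC. Qed.
Lemma dotpNr u w : dotp w (- u) = - dotp w u.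
Proof. by rewrite dotpC dotpNl dotpC. Qed.
Lemma dotpBr u v w : dotp w (u - v) = dotp w u - dotp w v.
Proof. by rewrite dotpDr dotpNr. Qed.

Lemma dotpp_ge0 u : 0 <= dotp u u.
Proof. by apply: sumr_ge0 => i _; rewrite -expr2 sqr_ge0. Qed.

Lemma enorm_sq u : enorm u ^+ 2 = dotp u u.
Proof. by rewrite /enorm sqr_sqrtr // dotpp_ge0. Qed.

Lemma enorm_ge0 u : 0 <= enorm u.
Proof. exact: sqrtr_ge0. Qed.

Lemma dotp0l w : dotp 0 w = 0.
Proof. by rewrite -(scale0r 0) dotpZl mul0r. Qed.

Lemma dotp_sum (I : Type) (r : seq I) (P : pred I) (f : I -> vec) w :
  dotp w (\sum_(i <- r | P i) f i) = \sum_(i <- r | P i) dotp w (f i).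
Proof.
elim/big_rec2: _ => [|i y1 y2 _ <-]; first by rewrite dotpC dotp0l.
by rewrite dotpDr.
Qed.

Lemma eqle (x y : R) : x = y -> x <= y.
Proof. by move->. Qed.

End Tools.

Section Foc.
Variables (R : realType) (d : nat).
Notation vec := 'rV[R]_d.
Implicit Types u v w : vec.

Lemma conv_mem (X : set vec) u v (s : R) : convex_set X -> X u -> X v ->
  0 <= s -> s <= 1 -> X (s *: u + (1 - s) *: v).
Proof.
move=> cX Xu Xv s0 s1.
have := cX u v (Itv01 s0 s1); rewrite !inE => /(_ Xu Xv).
by [].
Qed.

Lemma nsq_expand (q w : vec) (s : R) :
  dotp (q + s *: w) (q + s *: w) = dotp q q + 2 * s * dotp q w + s ^+ 2 * dotp w w.
Proof.
rewrite !dotpDl !dotpDr !dotpZl !dotpZr (dotpC w q); ring.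
Qed.

Lemma foc (X : set vec) (g zp x0 v : vec) (a b : R) : convex_set X ->
  0 <= a -> 0 <= b ->
  is_argmin X (fun u => dotp g u + 2^-1 * a * enorm (u - zp) ^+ 2
                          + 2^-1 * b * enorm (u - x0) ^+ 2) v ->
  forall u, X u -> 0 <= dotp (g + a *: (v - zp) + b *: (v - x0)) (u - v).
Proof.
move=> cX a0 b0 [Xv vmin] u Xu.
set G := dotp _ _.
have key : forall s : R, 0 <= s -> s <= 1 ->
    0 <= s * G + s ^+ 2 * ((a + b) / 2 * dotp (u - v) (u - v)).
  move=> s s0 s1.
  have := vmin _ (conv_mem cX Xu Xv s0 s1).
  have -> : s *: u + (1 - s) *: v = v + s *: (u - v).
    by rewrite scalerBl scale1r scalerBr addrCA.
  rewrite !enorm_sq.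
  have -> : v + s *: (u - v) - zp = (v - zp) + s *: (u - v) by rewrite addrAC.
  have -> : v + s *: (u - v) - x0 = (v - x0) + s *: (u - v) by rewrite addrAC.
  rewrite !nsq_expand [dotp g (v + _)]dotpDr dotpZr.
  have -> : G = dotp g (u - v) + a * dotp (v - zp) (u - v) + b * dotp (v - x0) (u - v).
    by rewrite /G (dotpDl (g + a *: (v - zp))) (dotpDl g) !dotpZl.
  move=> H; rewrite -subr_ge0 in H.
  apply: (le_trans H); rewrite le_eqVlt; apply/orP; left; apply/eqP.
  by field.
rewrite leNgt; apply/negP => G0.
set c := (a + b) / 2 * dotp (u - v) (u - v).
have c0 : 0 <= c by rewrite mulr_ge0 ?dotpp_ge0 // divr_ge0 ?addr_ge0.
have den : 0 < - G + c by rewrite ltr_wpDr // oppr_gt0.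
pose s := - G / (- G + c).
have s0 : 0 < s by rewrite divr_gt0 // oppr_gt0.
have s1 : s <= 1 by rewrite ler_pdivrMr // mul1r lerDl.
have := key s (ltW s0) s1.
have -> : s * G + s ^+ 2 * c = s * (G + s * c) by rewrite mulrDr mulrA expr2.
rewrite pmulr_rge0 //.
have -> : G + s * c = - (G ^+ 2) / (- G + c).
  rewrite /s; field; by rewrite gt_eqF.
rewrite pmulr_lge0 ?invr_gt0 // oppr_ge0 leNgt.
have -> : 0 < G ^+ 2 by rewrite expr2 nmulr_rgt0.
by [].
Qed.

End Foc.

Section Alg.
Variables (R : realType) (d : nat).
Notation vec := 'rV[R]_d.
Implicit Types u v w p q : vec.
Local Notation N u := (dotp u u).

Lemma polar p q w : 2 * dotp (p - q) (w - p) = N (w - q) - N (w - p) - N (p - q).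
Proof.
have -> : w - q = (w - p) + (p - q) by rewrite addrA subrK.
rewrite (dotpDl (w - p)) (dotpDr (w - p) (p - q) (w - p)) (dotpDr (w - p) (p - q) (p - q)) (dotpC (w - p) (p - q)).
ring.
Qed.

Lemma nsqC p q : N (p - q) = N (q - p).
Proof. by rewrite -opprB -scaleN1r dotpZl dotpZr mulrA mulrNN !mul1r. Qed.

Lemma step_alg (g0 g1 u zp z x x0 : vec) (a b : R) :
  0 <= dotp (g1 + a *: (z - zp) + b *: (z - x0)) (u - z) ->
  0 <= dotp (g0 + a *: (x - zp) + b *: (x - x0)) (z - x) ->
  dotp g1 (x - u) <= a / 2 * N (u - zp) - (a + b) / 2 * N (u - z)
     + b / 2 * N (u - x0) - (a + b) / 2 * N (x - z) - a / 2 * N (x - zp)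
     - b / 2 * N (x - x0) + dotp (g1 - g0) (x - z).
Proof.
rewrite (dotpDl (g1 + _)) (dotpDl g1) !dotpZl.
rewrite (dotpDl (g0 + _)) (dotpDl g0) !dotpZl.
have P1 := polar z zp u; have P2 := polar z x0 u.
have P3 := polar x zp z; have P4 := polar x x0 z.
have e1 : dotp g1 (x - u) = dotp (g1 - g0) (x - z) + dotp g0 (x - z) - dotp g1 (u - z).
  by rewrite !dotpBr !dotpBl; ring.
have e2 : dotp g0 (z - x) = - dotp g0 (x - z) by rewrite !dotpBr; ring.
move=> H1 H2; rewrite e1; rewrite e2 in H2; rewrite (nsqC z x) in P3 P4.
set A1 := dotp (z - zp) (u - z) in H1 P1.
set A2 := dotp (z - x0) (u - z) in H1 P2.
set A3 := dotp (x - zp) (z - x) in H2 P3.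
set A4 := dotp (x - x0) (z - x) in H2 P4.
have EA1 : A1 = (N (u - zp) - N (u - z) - N (z - zp)) / 2 by rewrite -P1; field.
have EA2 : A2 = (N (u - x0) - N (u - z) - N (z - x0)) / 2 by rewrite -P2; field.
have EA3 : A3 = (N (z - zp) - N (x - z) - N (x - zp)) / 2 by rewrite -P3; field.
have EA4 : A4 = (N (z - x0) - N (x - z) - N (x - x0)) / 2 by rewrite -P4; field.
rewrite EA1 EA2 in H1; rewrite EA3 EA4 in H2.
lra.
Qed.
End Alg.

Section Alg2.
Variables (R : realType) (d : nat).
Notation vec := 'rV[R]_d.
Implicit Types u v w p q g : vec.
Local Notation N u := (dotp u u).

Lemma nsq_sub g w (c : R) : N (g - c *: w) = N g - 2 * c * dotp g w + c ^+ 2 * N w.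
Proof.
rewrite dotpBl !dotpBr !dotpZl !dotpZr (dotpC w g); ring.
Qed.

Lemma cs_aux g w (c : R) : 0 < c -> dotp g w - c / 2 * N w <= N g / (2 * c).
Proof.
move=> c0; have := dotpp_ge0 (g - c *: w); rewrite nsq_sub => H.
rewrite -subr_ge0.
have -> : N g / (2 * c) - (dotp g w - c / 2 * N w) =
   (N g - 2 * c * dotp g w + c ^+ 2 * N w) / (2 * c).
  by field; rewrite gt_eqF.
by rewrite divr_ge0 // mulr_ge0 // ltW.
Qed.

Lemma nonexp_aux g w (c : R) : 0 <= c -> c * N w <= dotp g w -> c ^+ 2 * N w <= N g.
Proof.
move=> c0 H; have := dotpp_ge0 (g - c *: w); rewrite nsq_sub => H2.
have H3 : c ^+ 2 * N w <= c * dotp g w by rewrite expr2 -mulrA ler_wpM2l.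
lra.
Qed.

Lemma nonexp_step (g0 g1 zp z x x0 : vec) (a b : R) :
  0 <= a + b ->
  0 <= dotp (g1 + a *: (z - zp) + b *: (z - x0)) (x - z) ->
  0 <= dotp (g0 + a *: (x - zp) + b *: (x - x0)) (z - x) ->
  (a + b) ^+ 2 * N (x - z) <= N (g1 - g0).
Proof.
move=> ab H1 H2; apply: nonexp_aux => //.
move: H1 H2.
rewrite (dotpDl (g1 + _)) (dotpDl g1) !dotpZl.
rewrite (dotpDl (g0 + _)) (dotpDl g0) !dotpZl.
have -> : z - x = - (x - z) by rewrite opprB.
rewrite !dotpNr.
have E1 : dotp (z - zp) (x - z) = dotp (x - zp) (x - z) - N (x - z).
  by rewrite !dotpBl; ring.
have E2 : dotp (z - x0) (x - z) = dotp (x - x0) (x - z) - N (x - z).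
  by rewrite !dotpBl; ring.
rewrite E1 E2 (dotpBl g1 g0) => H1 H2.
lra.
Qed.

End Alg2.

Lemma tele (R : realType) (f : nat -> R) n :
  \sum_(1 <= t < n.+1) (f t.-1 - f t) = f 0%N - f n.
Proof.
rewrite big_add1 /=.
rewrite -(opprB (f n) (f 0%N)) -(telescope_sumr f (leq0n n)) -sumrN.
by apply: eq_bigr => i _; rewrite opprB.
Qed.

Lemma tele2 (R : realType) (f : nat -> R) n :
  \sum_(1 <= t < n.+1) (f t.+1 - f t) = f n.+1 - f 1%N.
Proof.
rewrite big_add1 /=.
exact: (telescope_sumr (fun i => f i.+1) (leq0n n)).
Qed.

Lemma tau_props (P : pred nat) n : (1 <= n)%N -> P 1%N ->
  let m := (\max_(1 <= t < n.+1 | P t) t)%N in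
  [/\ (1 <= m)%N, (m <= n)%N, P m & forall t, (1 <= t <= n)%N -> P t -> (t <= m)%N].
Proof.
move=> n1 P1 m.
have ub : forall t, (1 <= t <= n)%N -> P t -> (t <= m)%N.
  move=> t tn Pt; apply: (leq_bigmax_seq t) => //.
  by rewrite mem_index_iota ltnS.
have mn : (m <= n)%N.
  apply/bigmax_leqP_seq => i; rewrite mem_index_iota ltnS => /andP[_ ->] //.
have m1 : (1 <= m)%N by apply: ub => //; rewrite leqnn n1.
split => //.
clear ub mn m1; rewrite /m; clear m; elim: n n1 => // n IH _.
rewrite big_mkcond big_nat_recr //= -big_mkcond /=.
case: (ltnP 0 n) => [n0|]; last first.
  rewrite leqn0 => /eqP ->; rewrite big_geq //.
  by rewrite P1 max0n.
case Pn: (P n.+1); last by rewrite maxn0; apply: IH.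
have le : ((\max_(1 <= i < n.+1 | P i) i) <= n.+1)%N.
  apply/bigmax_leqP_seq => i; rewrite mem_index_iota ltnS => /andP[_ H] _.
  exact: leqW.
by rewrite (maxn_idPr le).
Qed.

Section Main.
Variables (R : realType) (d : nat) (X : set 'rV[R]_d)
  (F : 'rV[R]_d -> 'rV[R]_d) (beta g0 eta D : R) (T : nat)
  (x z : nat -> 'rV[R]_d).
Hypotheses (cX : convex_set X) (monF : monotone_on X F) (beta0 : 0 <= beta)
  (smF : smooth_on X F beta) (g0p : 0 < g0) (etap : 0 < eta) (Dp : 0 < D)
  (T1 : (1 <= T)%N) (alg : AdaPEG_iterates X F eta g0 T x z).

Local Notation N u := (dotp u u).
Local Notation gm t := (gam F x eta g0 t).
Local Notation g2 t := (gm2 F x eta g0 t).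
Local Notation dl t := (N (F (x t) - F (x t.-1))).

Definition SS t := \sum_(1 <= s < t.+1) dl s.

Lemma SS_ge0 t : 0 <= SS t.
Proof. by apply: sumr_ge0 => i _; apply: dotpp_ge0. Qed.

Lemma SS_mono s t : (s <= t)%N -> SS s <= SS t.
Proof.
move=> st; rewrite /SS [X in _ <= X](big_cat_nat (n := s.+1)) //= ?ltnS // lerDl.
by apply: sumr_ge0 => i _; apply: dotpp_ge0.
Qed.

Lemma gamE t : gm t = eta^-1 * Num.sqrt (eta ^+ 2 * g0 ^+ 2 + SS t).
Proof. by rewrite /gam /SS; congr (_ * Num.sqrt (_ + _)); apply: eq_bigr => s _; rewrite enorm_sq. Qed.

Lemma A0 t : 0 <= eta ^+ 2 * g0 ^+ 2 + SS t.
Proof. by rewrite addr_ge0 ?SS_ge0 // mulr_ge0 // sqr_ge0. Qed.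

Lemma gam_sq t : eta ^+ 2 * gm t ^+ 2 = eta ^+ 2 * g0 ^+ 2 + SS t.
Proof.
rewrite gamE exprMn mulrA -exprMn mulfV ?gt_eqF // expr1n mul1r sqr_sqrtr //.
exact: A0.
Qed.

Lemma gam_ge t : g0 <= gm t.
Proof.
rewrite gamE ler_pdivlMl //.
have -> : eta * g0 = Num.sqrt ((eta * g0) ^+ 2).
  by rewrite sqrtr_sqr ger0_norm // mulr_ge0 // ltW.
by rewrite ler_sqrt ?A0 // exprMn lerDl SS_ge0.
Qed.

Lemma gam_gt0 t : 0 < gm t.
Proof. exact: lt_le_trans (gam_ge t). Qed.

Lemma gam_mono s t : (s <= t)%N -> gm s <= gm t.
Proof.
move=> st; rewrite !gamE ler_pM2l ?invr_gt0 // ler_sqrt ?A0 //.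
by rewrite lerD2l SS_mono.
Qed.

Lemma gam0 : gm 0 = g0.
Proof.
rewrite gamE /SS big_geq // addr0 -exprMn sqrtr_sqr ger0_norm ?mulr_ge0 ?ltW //.
by rewrite mulKf ?gt_eqF.
Qed.

Lemma gam_le t : gm t <= g0 + eta^-1 * Num.sqrt (SS t).
Proof.
rewrite gamE.
have H : Num.sqrt (eta ^+ 2 * g0 ^+ 2 + SS t) <= eta * g0 + Num.sqrt (SS t).
  have p0 : 0 <= eta * g0 + Num.sqrt (SS t) by rewrite addr_ge0 ?sqrtr_ge0 // mulr_ge0 // ltW.
  rewrite -(ger0_norm p0) -sqrtr_sqr ler_sqrt ?sqr_ge0 //.
  rewrite sqrrD sqr_sqrtr ?SS_ge0 // exprMn lerD2r lerDl.
  by rewrite mulrn_wge0 // mulr_ge0 ?sqrtr_ge0 // mulr_ge0 // ltW.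
have en : eta != 0 by rewrite gt_eqF.
have -> : g0 + eta^-1 * Num.sqrt (SS t) = eta^-1 * (eta * g0 + Num.sqrt (SS t)).
  by field.
rewrite ler_wpM2l //.
by rewrite invr_ge0 ltW.
Qed.

Lemma gm2_ge0 t : 0 <= g2 t.
Proof. by case: t => [|[|t]] //=; apply: ltW; apply: gam_gt0. Qed.

Lemma gm2_le t : (1 <= t)%N -> g2 t <= gm t.-1.
Proof.
case: t => [|[|t]] //= _; first by apply: ltW; apply: gam_gt0.
exact: gam_mono.
Qed.


Lemma x_in t : (t <= T)%N -> X (x t).
Proof.
case: t => [_|t tT]; first by case: alg => _ [].
by case: alg => _ [_ /(_ t.+1)]; rewrite tT => /(_ isT) [[]].
Qed.

Lemma smooth_sq p q : X p -> X q -> N (F p - F q) <= beta ^+ 2 * N (p - q).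
Proof.
move=> Xp Xq; rewrite -!enorm_sq -exprMn.
by rewrite lerXn2r ?nnegrE ?enorm_ge0 ?mulr_ge0 ?enorm_ge0 //; apply: smF.
Qed.

Lemma divb (a M : R) : 0 <= M -> 0 <= a -> a <= beta ^+ 2 * M -> a / beta ^+ 2 <= M /\ a = beta ^+ 2 * (a / beta ^+ 2).
Proof.
move=> M0 a0 aM; have [b00|bp] := eqVneq beta 0.
  have e : beta ^+ 2 = 0 by rewrite b00 expr2 mul0r.
  rewrite e mul0r in aM; rewrite e invr0 mulr0 mul0r.
  by have -> : a = 0 by apply/le_anti; rewrite aM a0.

have b2 : 0 < beta ^+ 2 by rewrite exprn_gt0 // lt_def bp.
split; first by rewrite ler_pdivrMr // mulrC.
by rewrite mulrC divfK // gt_eqF.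
Qed.

Lemma par (A B : 'rV[R]_d) : N (A - B) <= 2 * N A + 2 * N B.
Proof.
have := dotpp_ge0 (A + B).
rewrite !(dotpDl, dotpDr, dotpNl, dotpNr) (dotpC B A); lra.
Qed.

Definition W t := dl t / (2 * gm t.-1).

Lemma W_ge0 t : 0 <= W t.
Proof. by rewrite divr_ge0 ?dotpp_ge0 // mulr_ge0 // ltW // gam_gt0. Qed.

Lemma per_step t u : (1 <= t <= T)%N -> X u -> N (u - x 0) <= D ^+ 2 ->
  dotp (F (x t)) (x t - u) <= g2 t / 2 * N (u - z t.-1) - g2 t.+1 / 2 * N (u - z t)
    + (g2 t.+1 - g2 t) / 2 * D ^+ 2 + W t + W t.-1
    - gm t.-2 * (dl t / beta ^+ 2) / 4.
Proof.
move=> /andP[t1 tT] Xu Du.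
case: alg => z0 [Xx0 Hall].
have [Hx Hz] := Hall t (introT andP (conj t1 tT)).
set a := g2 t; set b := gm t.-1 - a.
have a0 : 0 <= a by apply: gm2_ge0.
have b0 : 0 <= b by rewrite subr_ge0; apply: gm2_le.
have ab : a + b = gm t.-1 by rewrite /b addrC subrK.
have gS : g2 t.+1 = gm t.-1 by case: t t1 {Hx Hz a b a0 b0 ab} tT.
have fx := @foc _ _ X (F (x t.-1)) (z t.-1) (x 0) (x t) a b cX a0 b0 Hx.
have fz := @foc _ _ X (F (x t)) (z t.-1) (x 0) (z t) a b cX a0 b0 Hz.
have H := step_alg (fz u Xu) (fx (z t) Hz.1).
have cs := cs_aux (F (x t) - F (x t.-1)) (x t - z t) (gam_gt0 t.-1).
have HD : b / 2 * N (u - x 0) <= b / 2 * D ^+ 2 by rewrite ler_wpM2l // divr_ge0.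
have keyA : gm t.-2 / 2 * N (x t - z t.-1) <= a / 2 * N (x t - z t.-1) + b / 2 * N (x t - x 0).
  rewrite /b /a; case: t t1 tT {Hx Hz fx fz H cs HD a b a0 b0 ab gS} => [//|[|k]] _ tT /=.
    by rewrite z0 gam0 !mul0r add0r subr0.
  rewrite lerDl mulr_ge0 ?dotpp_ge0 // divr_ge0 // subr_ge0; exact: gam_mono.
have Xt := x_in tT.
have Xt1 : X (x t.-1) by apply: x_in; apply: leq_trans tT; apply: leq_pred.
have pe : N (x t - x t.-1) <= 2 * N (x t - z t.-1) + 2 * N (x t.-1 - z t.-1).
  have := par (x t - z t.-1) (x t.-1 - z t.-1).
  by rewrite opprB addrA subrK.
have [keyB _] := divb (addr_ge0 (mulr_ge0 (ler0n _ 2) (dotpp_ge0 _)) (mulr_ge0 (ler0n _ 2) (dotpp_ge0 _))) (dotpp_ge0 _) (le_trans (smooth_sq Xt Xt1) (ler_wpM2l (sqr_ge0 beta) pe)).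
have keyB' : gm t.-2 * (dl t / beta ^+ 2) / 4 <= gm t.-2 / 4 * (2 * N (x t - z t.-1) + 2 * N (x t.-1 - z t.-1)).
  rewrite mulrAC ler_wpM2l // ?divr_ge0 // ?ltW ?gam_gt0 //.
have keyC : gm t.-2 / 2 * N (x t.-1 - z t.-1) <= W t.-1.
  case: t t1 tT {Hx Hz fx fz H cs HD a b a0 b0 ab gS keyA Xt Xt1 pe keyB keyB'} => [//|[|k]] _ tT /=.
    by rewrite z0 subrr dotp0l mulr0; apply: W_ge0.
  have [Hx' Hz'] := Hall k.+1 (leq_trans (leqnSn _) tT).
  have a0' := gm2_ge0 k.+1; have b0' : 0 <= gm k - g2 k.+1 by rewrite subr_ge0; apply: gm2_le.
  have fx' := @foc _ _ X (F (x k)) (z k) (x 0) (x k.+1) _ _ cX a0' b0' Hx'.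
  have fz' := @foc _ _ X (F (x k.+1)) (z k) (x 0) (z k.+1) _ _ cX a0' b0' Hz'.
  have ne := nonexp_step (addr_ge0 a0' b0') (fz' _ (x_in (leq_trans (leqnSn _) tT))) (fx' _ Hz'.1).
  rewrite addrC subrK in ne.
  rewrite /W /=.
  have gp := gam_gt0 k.
  have g2p : 0 < 2 * gm k by apply: mulr_gt0.
  rewrite ler_pdivlMr //.
  by apply: le_trans ne; apply: eqle; field.
have cs' : dotp (F (x t) - F (x t.-1)) (x t - z t) - (a + b) / 2 * N (x t - z t) <= W t.
  by rewrite ab.
rewrite gS -ab.
have -> : a + b - a = b by rewrite addrC addKr.
lra.
Qed.

Lemma W0 : W 0 = 0.
Proof. by rewrite /W /= subrr dotp0l mul0r. Qed.

Arguments gm2 : simpl never.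

Lemma sum_step u : X u -> N (u - x 0) <= D ^+ 2 ->
  \sum_(1 <= t < T.+1) dotp (F (x t)) (x t - u) <=
  gm T.-1 / 2 * D ^+ 2 + \sum_(1 <= t < T.+1) (2 * W t - gm t.-2 * (dl t / beta ^+ 2) / 4).
Proof.
move=> Xu Du.
apply: le_trans; first by apply: ler_sum_nat => t tT; apply: per_step.
cbv beta. rewrite -[\sum_(1 <= i < T.+1) (_ - gm i.-2 * _ / 4)]/(\sum_(1 <= i < T.+1) (_ - _)).
rewrite sumrB !big_split /= sumrN.
set f := fun t => g2 t.+1 / 2 * N (u - z t).
have e1 : \sum_(1 <= t < T.+1) (g2 t / 2 * N (u - z t.-1) - g2 t.+1 / 2 * N (u - z t))
    = f 0%N - f T.
  rewrite -tele; apply: eq_big_nat => t /andP[t1 _]; rewrite /f; by case: t t1.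
have e2 : \sum_(1 <= t < T.+1) ((g2 t.+1 - g2 t) / 2 * D ^+ 2) =
   (g2 T.+1 - g2 1) / 2 * D ^+ 2.
  by rewrite -!mulr_suml tele2.
have e3 : \sum_(1 <= t < T.+1) W t.-1 <= \sum_(1 <= t < T.+1) W t.
  rewrite -subr_ge0 -sumrB.
  have -> : \sum_(1 <= t < T.+1) (W t - W t.-1) = - \sum_(1 <= t < T.+1) (W t.-1 - W t).
    by rewrite -sumrN; apply: eq_bigr => i _; rewrite opprB.
  by rewrite tele opprB W0 subr0 W_ge0.
have e4 : \sum_(1 <= t < T.+1) (2 * W t - gm t.-2 * (dl t / beta ^+ 2) / 4) =
   2 * \sum_(1 <= t < T.+1) W t - \sum_(1 <= t < T.+1) gm t.-2 * (dl t / beta ^+ 2) / 4.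
  by rewrite sumrB mulr_sumr.
have f0 : f 0%N = 0 by rewrite /f /gm2 /= !mul0r.
have fT : 0 <= f T by rewrite /f mulr_ge0 ?dotpp_ge0 // divr_ge0 // gm2_ge0.
have gT : g2 T.+1 = gm T.-1 by case: T T1 => //= n _; rewrite /gm2.
rewrite sumrB in e1.
have g1 : g2 1 = 0 by rewrite /gm2.
rewrite e1 e2 gT g1 f0 sumrN -mulr_sumr.
lra.
Qed.

Lemma dl_q t : (1 <= t <= T)%N -> 0 <= dl t / beta ^+ 2 /\ dl t = beta ^+ 2 * (dl t / beta ^+ 2).
Proof.
move=> /andP[t1 tT].
have Xt := x_in tT.
have Xt1 : X (x t.-1) by apply: x_in; apply: leq_trans tT; apply: leq_pred.
have [_ e] := divb (dotpp_ge0 (x t - x t.-1)) (dotpp_ge0 _) (smooth_sq Xt Xt1).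
split => //; rewrite divr_ge0 ?dotpp_ge0 // sqr_ge0 //.
Qed.

Lemma amgm (y Q : R) : 0 <= y -> 0 <= Q -> y ^+ 2 = beta ^+ 2 * Q ->
  eta^-1 * y / 2 * D ^+ 2 <= (2 * g0)^-1 * (D ^+ 4 / eta ^+ 2) * beta ^+ 2 + g0 * Q / 8.
Proof.
move=> y0 Q0 yQ.
have [b00|bp] := eqVneq beta 0.
  have : y ^+ 2 = 0 by rewrite yQ b00 expr2 !mul0r.
  move/eqP; rewrite sqrf_eq0 => /eqP ->; rewrite mulr0 !mul0r.
  have h1 : 0 <= (2 * g0)^-1 by rewrite invr_ge0 mulr_ge0 // ltW.
  have h2 : 0 <= D ^+ 4 / eta ^+ 2 by rewrite divr_ge0 // exprn_ge0 // ltW.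
  have h3 : 0 <= g0 * Q / 8 by rewrite divr_ge0 // mulr_ge0 // ltW.
  apply: addr_ge0 => //; apply: mulr_ge0; [exact: mulr_ge0 | exact: sqr_ge0].
have b2 : beta ^+ 2 != 0 by rewrite expf_neq0.
have -> : Q = y ^+ 2 / beta ^+ 2 by rewrite yQ [beta ^+ 2 * Q]mulrC mulfK.
rewrite -subr_ge0.
have -> : (2 * g0)^-1 * (D ^+ 4 / eta ^+ 2) * beta ^+ 2 + g0 * (y ^+ 2 / beta ^+ 2) / 8 -
   eta^-1 * y / 2 * D ^+ 2 = (g0 * y - 2 * beta ^+ 2 * D ^+ 2 / eta) ^+ 2 / (8 * beta ^+ 2 * g0).
  have bpos : 0 < beta by rewrite lt_def bp beta0.
  by field; rewrite ?gt_eqF.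
apply: divr_ge0; first exact: sqr_ge0.
apply: mulr_ge0; [apply: mulr_ge0 => //; exact: sqr_ge0 | exact: ltW].
Qed.

Lemma final_bound (tt : nat) : tt = tau F x eta g0 beta T ->
  gm T.-1 / 2 * D ^+ 2 + \sum_(1 <= t < T.+1) (2 * W t - gm t.-2 * (dl t / beta ^+ 2) / 4) <=
  (2 * g0)^-1 * (D ^+ 4 / eta ^+ 2) * beta ^+ 2 + g0 / 2 * D ^+ 2
  + 8 / g0 * beta ^+ 2 * eta ^+ 2 + g0^-1 * dl tt + g0^-1 * dl tt.-1.
Proof.
move=> ttE.
have P1 : g2 1 <= 2 * Num.sqrt 2 * beta.
  by rewrite /gm2 mulr_ge0 // mulr_ge0 // sqrtr_ge0.
have [tt1 ttT Ptt ttub] := tau_props (P := fun t => g2 t <= 2 * Num.sqrt 2 * beta) T1 P1.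
rewrite -/(tau F x eta g0 beta T) -ttE in tt1 ttT Ptt ttub.
set q := fun t => dl t / beta ^+ 2.
set Q := \sum_(1 <= t < T.+1) q t.
have Q0 : 0 <= Q.
  rewrite /Q big_nat_cond; apply: sumr_ge0 => t /andP[tr _]; exact: (dl_q tr).1.
have SSQ : SS T = beta ^+ 2 * Q.
  by rewrite /SS /Q mulr_sumr; apply: eq_big_nat => t tr; exact: (dl_q tr).2.
set y := Num.sqrt (SS T).
have y0 : 0 <= y by apply: sqrtr_ge0.
have yQ : y ^+ 2 = beta ^+ 2 * Q by rewrite sqr_sqrtr ?SS_ge0.
have am := amgm y0 Q0 yQ.
have gle : gm T.-1 <= g0 + eta^-1 * y.
  apply: le_trans (gam_le T.-1) _; rewrite lerD2l; apply: ler_wpM2l.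
    by rewrite invr_ge0 ltW.
  by rewrite /y ler_sqrt ?SS_ge0 // SS_mono // leq_pred.
have H1 : gm T.-1 / 2 * D ^+ 2 <= (g0 + eta^-1 * y) / 2 * D ^+ 2.
  by rewrite ler_wpM2r ?sqr_ge0 // ler_wpM2r // invr_ge0.
pose f := fun t => dl t / gm t.-1.
have sumB : \sum_(1 <= t < T.+1) (2 * W t - gm t.-2 * (dl t / beta ^+ 2) / 4) + g0 * Q / 8
    <= \sum_(1 <= t < T.+1) (if (t < tt.+1)%N then f t else 0).
  rewrite /Q mulr_sumr mulr_suml -big_split /=.
  apply: ler_sum_nat => t tr.
  have [q0 dlE] := dl_q tr.
  have egt := gam_gt0 t.-1.
  have W2 : 2 * W t = f t by rewrite /W /f; field; rewrite gt_eqF.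
  have gq : g0 * q t <= gm t.-2 * q t by rewrite ler_wpM2r // gam_ge.
  rewrite W2 /q; rewrite -/(q t) in gq q0 dlE *.
  have cq0 : 0 <= gm t.-2 * q t by rewrite mulr_ge0 // ltW // gam_gt0.
  have g0q : 0 <= g0 * q t by rewrite mulr_ge0 // ltW.
  case: ifP => ht.
    lra.
  have nP : ~~ (g2 t <= 2 * Num.sqrt 2 * beta).
    by apply/negP => Pt; move: (ttub t tr Pt); rewrite -ltnS ht.
  rewrite -ltNge in nP.
  have gt2 : g2 t = gm t.-2.
    case: t tr {q0 dlE egt W2 gq ht cq0 g0q} nP => [//|[|k]] tr nP //=.
      by move: nP; rewrite ltNge P1.
  rewrite gt2 in nP.
  have ce : gm t.-2 <= gm t.-1 by apply: gam_mono; apply: leq_pred.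
  set c := gm t.-2 in nP gq cq0 ce *; set e := gm t.-1 in egt ce *.
  have c0 : 0 <= 2 * Num.sqrt 2 * beta by rewrite mulr_ge0 // mulr_ge0 // sqrtr_ge0.
  have h8 : 8 * beta ^+ 2 <= c ^+ 2.
    have e8 : (2 * Num.sqrt 2 * beta) ^+ 2 = 8 * beta ^+ 2.
      by rewrite !exprMn sqr_sqrtr //; ring.
    rewrite -e8; exact: (lerXn2r 2 c0 (le_trans c0 (ltW nP)) (ltW nP)).
  have h1 : 8 * beta ^+ 2 * q t <= c ^+ 2 * q t by apply: ler_wpM2r.
  have c00 : 0 <= c by apply: le_trans c0 (ltW nP).
  have h2 : c ^+ 2 * q t <= c * e * q t.
    by apply: ler_wpM2r => //; rewrite expr2; apply: ler_wpM2l.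
  have hf : f t <= c * q t / 8.
    rewrite /f dlE ler_pdivrMr // -/e; lra.
  lra.
have sum1 : \sum_(1 <= t < T.+1) (if (t < tt.+1)%N then f t else 0) = \sum_(1 <= t < tt.+1) f t.
  by rewrite (big_nat_widen 1 tt.+1 T.+1 xpredT f) //= [RHS]big_mkcond.
have sum2 : \sum_(1 <= t < tt.+1) f t <= SS tt / g0.
  rewrite /SS mulr_suml; apply: ler_sum_nat => t tr.
  rewrite /f ler_wpM2l ?dotpp_ge0 // lef_pV2 ?posrE ?gam_gt0 //; exact: gam_ge.
have sum3 : SS tt <= 8 * beta ^+ 2 * eta ^+ 2 + dl tt + dl tt.-1.
  have h0 : 0 <= 8 * beta ^+ 2 * eta ^+ 2 by rewrite mulr_ge0 ?sqr_ge0 // mulr_ge0 // sqr_ge0.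
  case: tt {ttE ttT ttub sum1 sum2 sumB} tt1 Ptt => [//|[|k]] _ Ptt.
    rewrite /SS big_nat1 /=.
    have := dotpp_ge0 (F (x 0%N) - F (x 0%N)); lra.
  rewrite /SS big_nat_recr // big_nat_recr //= -/(SS k).
  have c0 : 0 <= 2 * Num.sqrt 2 * beta by rewrite mulr_ge0 // mulr_ge0 // sqrtr_ge0.
  have gk : gm k <= 2 * Num.sqrt 2 * beta by move: Ptt; rewrite /gm2.
  have h8 : gm k ^+ 2 <= 8 * beta ^+ 2.
    have e8 : (2 * Num.sqrt 2 * beta) ^+ 2 = 8 * beta ^+ 2.
      by rewrite !exprMn sqr_sqrtr //; ring.
    rewrite -e8; exact: (lerXn2r 2 (ltW (gam_gt0 k)) c0 gk).
  have h9 : eta ^+ 2 * gm k ^+ 2 <= eta ^+ 2 * (8 * beta ^+ 2) by apply: ler_wpM2l => //; apply: sqr_ge0.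
  have := gam_sq k.
  have := mulr_ge0 (sqr_ge0 eta) (sqr_ge0 g0).
  lra.
have sum4 : SS tt / g0 <= (8 * beta ^+ 2 * eta ^+ 2 + dl tt + dl tt.-1) / g0.
  by apply: ler_wpM2r => //; rewrite invr_ge0 ltW.
rewrite sum1 in sumB.
lra.
Qed.

Lemma err_bound :
  ErrD X F (x 0%N) D (xbar x T) <=
    (T%:R)^-1 * ((2 * g0)^-1 * (D ^+ 4 / eta ^+ 2) * beta ^+ 2
                 + g0 / 2 * D ^+ 2
                 + 8 / g0 * beta ^+ 2 * eta ^+ 2
                 + g0^-1 * enorm (F (x (tau F x eta g0 beta T)) - F (x (tau F x eta g0 beta T).-1)) ^+ 2
                 + g0^-1 * enorm (F (x (tau F x eta g0 beta T).-1) - F (x (tau F x eta g0 beta T).-2)) ^+ 2).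
Proof.
rewrite !enorm_sq.
have Xx0 : X (x 0%N) by case: alg => _ [].
apply: ge_sup.
  exists (dotp (F (x 0%N)) (xbar x T - x 0%N)); exists (x 0%N) => //; split => //.
  by rewrite subrr /enorm dotp0l sqrtr0 ltW.
move=> v [y [Xy Dy] <-].
have Ny : N (y - x 0%N) <= D ^+ 2.
  rewrite -enorm_sq; exact: (lerXn2r 2 (enorm_ge0 _) (ltW Dp) Dy).
have S := sum_step Xy Ny.
have fb := final_bound (erefl (tau F x eta g0 beta T)).
have mono : \sum_(1 <= t < T.+1) dotp (F y) (x t - y) <= \sum_(1 <= t < T.+1) dotp (F (x t)) (x t - y).
  apply: ler_sum_nat => t /andP[t1 tT].
  have := monF (x_in tT) Xy; rewrite dotpBl; lra.
have Tp : 0 < T%:R :> R by rewrite ltr0n.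
have avg : dotp (F y) (xbar x T - y) = T%:R^-1 * \sum_(1 <= t < T.+1) dotp (F y) (x t - y).
  have -> : \sum_(1 <= t < T.+1) dotp (F y) (x t - y) =
     \sum_(1 <= t < T.+1) dotp (F y) (x t) - dotp (F y) y *+ T.
    have e : \sum_(1 <= t < T.+1) dotp (F y) (x t - y) =
        \sum_(1 <= t < T.+1) (dotp (F y) (x t) - dotp (F y) y).
      by apply: eq_bigr => i _; rewrite dotpBr.
    by rewrite e sumrB sumr_const_nat subn1.
  rewrite /xbar dotpBr dotpZr dotp_sum -[dotp (F y) y *+ T]mulr_natr.
  by field; rewrite gt_eqF.
rewrite avg; apply: ler_wpM2l; first by rewrite invr_ge0 ltW.
lra.
Qed.

End Main.

Unset Implicit Arguments.

Theorem lemmaC14 (R : realType) (d : nat) (X : set 'rV[R]_d)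
  (F : 'rV[R]_d -> 'rV[R]_d) (beta g0 eta D : R) (T : nat)
  (x z : nat -> 'rV[R]_d) :
  X !=set0 -> closed X -> convex_set X ->
  monotone_on X F -> 0 <= beta -> smooth_on X F beta ->
  0 < g0 -> 0 < eta -> 0 < D -> (1 <= T)%N ->
  AdaPEG_iterates X F eta g0 T x z ->
  let tt := tau F x eta g0 beta T in
  ErrD X F (x 0%N) D (xbar x T) <=
    (T%:R)^-1 * ((2 * g0)^-1 * (D ^+ 4 / eta ^+ 2) * beta ^+ 2
                 + g0 / 2 * D ^+ 2
                 + 8 / g0 * beta ^+ 2 * eta ^+ 2
                 + g0^-1 * enorm (F (x tt) - F (x tt.-1)) ^+ 2
                 + g0^-1 * enorm (F (x tt.-1) - F (x tt.-2)) ^+ 2).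
Proof.
move=> _ _ cX monF b0 smF g0p etap Dp T1 alg.
exact: (err_bound cX monF b0 smF g0p etap Dp T1 alg).
Qed.
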